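(* Let $A\in\mathrm{SL}(2,\mathbb R)$ and $\tau>0$ with $A\Lambda_q\cap S_\tau\ne\emptyset$, and let $(\mathbf u_n=(q_n,a_n)^T)_{n\ge0}$ be elements of $A\Lambda_q\cap S_\tau$ with successive slopes, i.e. for each $n$, $\mathbf u_{n+1}$ is the element of $A\Lambda_q\cap S_\tau$ of smallest slope strictly greater than $a_n/q_n$. Then $s_{1/\tau}h_{a_0/q_0}A\Lambda_q$ contains the horizontal vector $(q_0/\tau,0)^T\in S_1$, and hence equals $g_{a,b}\Lambda_q$ for a unique $(a,b)\in\mathscr T^q$. Moreover: (1) for each $n\ge0$, $s_{1/\tau}h_{a_n/q_n}A\Lambda_q$ contains the horizontal vector $(q_n/\tau,0)^T\in S_1$ and $s_{1/\tau}h_{a_n/q_n}A\Lambda_q=g_{\mathrm{BCZ}_q^n(a,b)}\Lambda_q$; i.e. $\mathrm{FTR}_q(A,\tau,\mathbf u_n)=\mathrm{BCZ}_q^n(\mathrm{FTR}_q(A,\tau,\mathbf u_0))$; (2) writing $L_n^q(a,b)$ for the first coordinate of $\mathrm{BCZ}_q^n(a,b)$, we have $q_n=\tau L_n^q(a,b)=\tau L_0^q(\mathrm{BCZ}_q^n(a,b))$, and for all $n\ge0$ $$a_{n+1}=q_{n+1}\left(\frac{a_n}{q_n}+\frac1{\tau^2}R_q(\mathrm{BCZ}_q^n(a,b))\right).$$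
   Context: Fix an integer $q\ge3$, let $\lambda_q=2\cos(\pi/q)$, and let $G_q\subset \mathrm{SL}(2,\mathbb R)$ be the Hecke triangle group generated by $S=\begin{pmatrix}0&-1\\1&0\end{pmatrix}$ and $T_q=\begin{pmatrix}1&\lambda_q\\0&1\end{pmatrix}$, acting linearly on $\mathbb R^2$; $\Lambda_q=G_q(1,0)^T$, $A\Lambda_q=\{A\mathbf v:\mathbf v\in\Lambda_q\}$. Matrices: $h_s=\begin{pmatrix}1&0\\-s&1\end{pmatrix}$, $s_\tau=\begin{pmatrix}\tau&0\\0&\tau^{-1}\end{pmatrix}$, $g_{a,b}=\begin{pmatrix}a&b\\0&a^{-1}\end{pmatrix}$, with $g_{(a,b)}:=g_{a,b}$. $S_\tau=\{(x,y)^T:0<x\le\tau\}$; slope of $(x,y)^T$ with $x\ne0$ is $y/x$. $\mathscr T^q=\{(a,b):0<a\le1,\ 1-\lambda_qa<b\le1\}$. Facts (established earlier): for every $(a,b)\in\mathscr T^q$, $g_{a,b}\Lambda_q\cap S_1$ contains a vector of smallest positive slope, denoted $R_q(a,b)$ (the $G_q$-roof function); and whenever $B\Lambda_q$ ($B\in\mathrm{SL}(2,\mathbb R)$) contains a horizontal vector $(c,0)^T$ with $0<c\le1$ there is a unique $(a',b')\in\mathscr T^q$ with $B\Lambda_q=g_{a',b'}\Lambda_q$, and $a'=c$. The $G_q$-BCZ map $\mathrm{BCZ}_q:\mathscr T^q\to\mathscr T^q$ sends $(a,b)$ to the unique $(c,d)\in\mathscr T^q$ with $h_{R_q(a,b)}g_{a,b}\Lambda_q=g_{c,d}\Lambda_q$.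 For $\mathbf u\in A\Lambda_q\cap S_\tau$, the Farey triangle representative $\mathrm{FTR}_q(A,\tau,\mathbf u)$ is the unique $(a,b)\in\mathscr T^q$ with $s_{1/\tau}h_{\mathrm{slope}(\mathbf u)}A\Lambda_q=g_{a,b}\Lambda_q$. *)

(* Defs.v *)
From Stdlib Require Import Reals Lra Lia ClassicalEpsilon.
Open Scope R_scope.

Record M2 := mkM2 { m11 : R; m12 : R; m21 : R; m22 : R }.
Definition vec := (R * R)%type.

Definition mmul (A B : M2) : M2 :=
  mkM2 (m11 A * m11 B + m12 A * m21 B) (m11 A * m12 B + m12 A * m22 B)
       (m21 A * m11 B + m22 A * m21 B) (m21 A * m12 B + m22 A * m22 B).
Definition mapply (A : M2) (v : vec) : vec :=
  (m11 A * fst v + m12 A * snd v, m21 A * fst v + m22 A * snd v).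
Definition det (A : M2) : R := m11 A * m22 A - m12 A * m21 A.
Definition SL2 (A : M2) : Prop := det A = 1.
Definition Id2 : M2 := mkM2 1 0 0 1.

Definition lambda_q (q : nat) : R := 2 * cos (PI / INR q).
Definition Smat : M2 := mkM2 0 (-1) 1 0.
Definition Sinv : M2 := mkM2 0 1 (-1) 0.
Definition Tq (q : nat) : M2 := mkM2 1 (lambda_q q) 0 1.
Definition Tqinv (q : nat) : M2 := mkM2 1 (- lambda_q q) 0 1.

Inductive in_Gq (q : nat) : M2 -> Prop :=
| Gq_id : in_Gq q Id2
| Gq_S : forall M, in_Gq q M -> in_Gq q (mmul Smat M)
| Gq_Sinv : forall M, in_Gq q M -> in_Gq q (mmul Sinv M)
| Gq_T : forall M, in_Gq q M -> in_Gq q (mmul (Tq q) M)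
| Gq_Tinv : forall M, in_Gq q M -> in_Gq q (mmul (Tqinv q) M).

Definition Lambda_q (q : nat) (v : vec) : Prop :=
  exists M, in_Gq q M /\ v = mapply M (1, 0).

Definition InLat (q : nat) (A : M2) (v : vec) : Prop :=
  exists w, Lambda_q q w /\ v = mapply A w.

Definition lat_eq (q : nat) (B C : M2) : Prop :=
  forall v, InLat q B v <-> InLat q C v.

Definition Strip (tau : R) (v : vec) : Prop := 0 < fst v <= tau.
Definition slope (v : vec) : R := snd v / fst v.

Definition hmat (s : R) : M2 := mkM2 1 0 (- s) 1.
Definition smat (tau : R) : M2 := mkM2 tau 0 0 (/ tau).
Definition gmat (p : R * R) : M2 := mkM2 (fst p) (snd p) 0 (/ fst p).

Definition FareyT (q : nat) (p : R * R) : Prop :=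
  0 < fst p <= 1 /\ 1 - lambda_q q * fst p < snd p <= 1.

Definition IsRoof (q : nat) (p : R * R) (r : R) : Prop :=
  (exists v, InLat q (gmat p) v /\ Strip 1 v /\ 0 < slope v /\ slope v = r) /\
  (forall w, InLat q (gmat p) w -> Strip 1 w -> 0 < slope w -> r <= slope w).

Definition Roof (q : nat) (p : R * R) : R :=
  epsilon (inhabits 0) (IsRoof q p).

Definition BCZ (q : nat) (p : R * R) : R * R :=
  epsilon (inhabits p)
    (fun c => FareyT q c /\ lat_eq q (mmul (hmat (Roof q p)) (gmat p)) (gmat c)).

Definition BCZ_iter (q : nat) (n : nat) (p : R * R) : R * R :=
  Nat.iter n (BCZ q) p.

Definition FTRmat (A : M2) (tau : R) (u : vec) : M2 :=
  mmul (smat (/ tau)) (mmul (hmat (slope u)) A).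

Definition FTR (q : nat) (A : M2) (tau : R) (u : vec) : R * R :=
  epsilon (inhabits (0, 0))
    (fun c => FareyT q c /\ lat_eq q (FTRmat A tau u) (gmat c)).

(* Main.v *)
Require Import Defs.
From Stdlib Require Import ZArith Reals Lra Lia ClassicalEpsilon.
Open Scope R_scope.

Lemma M2_ext (A B : M2) : m11 A = m11 B -> m12 A = m12 B -> m21 A = m21 B -> m22 A = m22 B -> A = B.
Proof. destruct A, B; simpl; intros; subst; reflexivity. Qed.

Ltac meq := apply M2_ext; simpl; try field; try ring.

Lemma mmul_assoc A B C : mmul A (mmul B C) = mmul (mmul A B) C.
Proof. destruct A, B, C; meq. Qed.
Lemma mmul_Id_l A : mmul Id2 A = A. Proof. destruct A; meq. Qed.
Lemma mmul_Id_r A : mmul A Id2 = A. Proof. destruct A; meq. Qed.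
Lemma mapply_mmul A B v : mapply (mmul A B) v = mapply A (mapply B v).
Proof. destruct A, B, v; unfold mapply, mmul; simpl; f_equal; ring. Qed.
Lemma det_mmul A B : det (mmul A B) = det A * det B.
Proof. destruct A, B; unfold det, mmul; simpl; ring. Qed.

Definition scal (e : R) (M : M2) := mkM2 (e * m11 M) (e * m12 M) (e * m21 M) (e * m22 M).
Definition minv (M : M2) := mkM2 (m22 M) (- m12 M) (- m21 M) (m11 M).

Lemma Gq_det q M : in_Gq q M -> det M = 1.
Proof.
  induction 1; rewrite ?det_mmul, ?IHin_Gq; unfold det; simpl; ring.
Qed.

Lemma Gq_mul q M N : in_Gq q M -> in_Gq q N -> in_Gq q (mmul M N).
Proof.
  intros HM HN; induction HM.
  - rewrite mmul_Id_l; exact HN.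
  - rewrite <- mmul_assoc; now constructor.
  - rewrite <- mmul_assoc; now constructor.
  - rewrite <- mmul_assoc; now constructor.
  - rewrite <- mmul_assoc; now constructor.
Qed.

Lemma Gq_gen q g M : in_Gq q M -> (g = Smat \/ g = Sinv \/ g = Tq q \/ g = Tqinv q) -> in_Gq q (mmul g M).
Proof. intros H [E|[E|[E|E]]]; subst g; now constructor. Qed.

Lemma Gq_one q g : (g = Smat \/ g = Sinv \/ g = Tq q \/ g = Tqinv q) -> in_Gq q g.
Proof. intros H; rewrite <- (mmul_Id_r g); apply Gq_gen; auto; constructor. Qed.

Lemma Gq_inv q M : in_Gq q M -> in_Gq q (minv M).
Proof.
  induction 1.
  - replace (minv Id2) with Id2 by meq. constructor.
  - replace (minv (mmul Smat M)) with (mmul (minv M) Sinv) by (destruct M; meq).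
    apply Gq_mul; auto; apply Gq_one; tauto.
  - replace (minv (mmul Sinv M)) with (mmul (minv M) Smat) by (destruct M; meq).
    apply Gq_mul; auto; apply Gq_one; tauto.
  - replace (minv (mmul (Tq q) M)) with (mmul (minv M) (Tqinv q)) by (destruct M; unfold Tqinv, Tq; meq).
    apply Gq_mul; auto; apply Gq_one; tauto.
  - replace (minv (mmul (Tqinv q) M)) with (mmul (minv M) (Tq q)) by (destruct M; unfold Tqinv, Tq; meq).
    apply Gq_mul; auto; apply Gq_one; tauto.
Qed.

Lemma minv_l M : det M = 1 -> mmul (minv M) M = Id2.
Proof. destruct M; unfold det; simpl; intro H; meq; lra. Qed.
Lemma minv_r M : det M = 1 -> mmul M (minv M) = Id2.
Proof. destruct M; unfold det; simpl; intro H; meq; lra. Qed.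

Section Hecke.
Variable q : nat.
Hypothesis Hq : (3 <= q)%nat.

Definition th := PI / INR q.
Definition sn (j : nat) := sin (INR j * th) / sin th.
Definition smin (j : nat) := match j with O => -1 | S k => sn k end.

Lemma INRq : 3 <= INR q.
Proof. replace 3 with (INR 3) by (simpl; ring). apply le_INR; exact Hq. Qed.

Lemma th_pos : 0 < th.
Proof. unfold th; pose proof PI_RGT_0; pose proof INRq; apply Rdiv_lt_0_compat; lra. Qed.
Lemma th_le : th <= PI / 3.
Proof. unfold th; pose proof PI_RGT_0; pose proof INRq.
  apply Rmult_le_compat_l; [lra|]. apply Rinv_le_contravar; lra. Qed.
Lemma qth : INR q * th = PI.
Proof. unfold th; pose proof INRq; field; lra. Qed.
Lemma sth_pos : 0 < sin th.
Proof. pose proof th_pos; pose proof th_le; pose proof PI_RGT_0; apply sin_gt_0; lra. Qed.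
Lemma lam_eq : lambda_q q = 2 * cos th.
Proof. reflexivity. Qed.
Lemma lam_lt2 : lambda_q q < 2.
Proof. rewrite lam_eq. pose proof (sin2_cos2 th). pose proof sth_pos. unfold Rsqr in *.
  assert (cos th < 1) by nra. lra. Qed.

Lemma sn_rec k : sn (S (S k)) = lambda_q q * sn (S k) - sn k.
Proof.
  unfold sn; rewrite lam_eq. rewrite !S_INR.
  replace ((INR k + 1 + 1) * th) with ((INR k + 1) * th + th) by ring.
  replace (INR k * th) with ((INR k + 1) * th - th) by ring.
  rewrite sin_plus, sin_minus. pose proof sth_pos. field. lra.
Qed.
Lemma sn0 : sn 0 = 0. Proof. unfold sn; simpl. rewrite Rmult_0_l, sin_0. field. pose proof sth_pos; lra. Qed.
Lemma sn1 : sn 1 = 1. Proof. unfold sn; simpl. rewrite Rmult_1_l. pose proof sth_pos; field; lra. Qed.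
Lemma snq : sn q = 0. Proof. unfold sn; rewrite qth, sin_PI; field; pose proof sth_pos; lra. Qed.
Lemma snq1 : sn (S q) = -1.
Proof. unfold sn; rewrite S_INR. replace ((INR q + 1) * th) with (th + PI) by (rewrite <- qth; ring).
  rewrite neg_sin; field; pose proof sth_pos; lra. Qed.
Lemma snqm1 : sn (pred q) = 1.
Proof. unfold sn. replace (INR (pred q)) with (INR q - 1).
  2:{ destruct q; [lia|]. simpl pred. rewrite S_INR; ring. }
  replace ((INR q - 1) * th) with (PI - th) by (rewrite <- qth; ring).
  rewrite sin_PI_x; field; pose proof sth_pos; lra. Qed.

Definition Z0 (x : R) := x = 0 \/ 1 <= x.
Lemma Z0_add x y : Z0 x -> Z0 y -> Z0 (x + y).
Proof. unfold Z0; intros [->|Hx] [->|Hy]; lra. Qed.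
Lemma Z0_mul x y : Z0 x -> Z0 y -> Z0 (x * y).
Proof. unfold Z0; intros [->|Hx] [->|Hy]; try (left; ring). right; nra. Qed.

Lemma sin_ge_th x : th <= x <= PI - th -> sin th <= sin x.
Proof.
  intros [H1 H2]. pose proof th_pos; pose proof th_le; pose proof PI_RGT_0.
  destruct (Rle_dec x (PI/2)).
  - apply sin_incr_1; lra.
  - rewrite <- (sin_PI_x x). apply sin_incr_1; lra.
Qed.

Lemma sn_Z0 j : (j <= q)%nat -> Z0 (sn j).
Proof.
  intro Hj. destruct j as [|j']. { left; apply sn0. }
  destruct (Nat.eq_dec (S j') q) as [E|E]. { left; rewrite E; apply snq. }
  right. unfold sn. pose proof sth_pos. apply (Rmult_le_reg_r (sin th)); auto.
  unfold Rdiv; rewrite Rmult_assoc, Rinv_l, Rmult_1_l, Rmult_1_r by lra.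
  apply sin_ge_th. pose proof th_pos.
  assert (1 <= INR (S j')) by (apply (le_INR 1); lia).
  assert (INR (S j') <= INR q - 1).
  { replace (INR q - 1) with (INR (pred q)). apply le_INR; lia.
    destruct q; [lia|]. simpl pred. rewrite S_INR; ring. }
  split; [nra|]. rewrite <- qth. nra.
Qed.

Definition Umat := mkM2 (lambda_q q) (-1) 1 0.
Definition upow (j : nat) := Nat.iter j (mmul Umat) Id2.

Lemma upow_formula j : upow j = mkM2 (sn (S j)) (- sn j) (sn j) (- smin j).
Proof.
  induction j.
  - unfold upow; simpl; rewrite sn0, sn1; meq.
  - change (upow (S j)) with (mmul Umat (upow j)). rewrite IHj.
    unfold Umat; apply M2_ext; simpl.
    + rewrite sn_rec; ring.
    + destruct j; simpl. rewrite sn0, sn1; ring. rewrite sn_rec; ring.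
    + ring.
    + ring.
Qed.

Lemma upow_q : upow q = mkM2 (-1) 0 0 (-1).
Proof. rewrite upow_formula. assert (E : smin q = sn (pred q)).
  { destruct q; [lia|]. reflexivity. }
  rewrite E, snq, snq1, snqm1. meq. Qed.

Lemma Umat_Sinv : mmul Umat Sinv = Tq q.
Proof. unfold Umat, Sinv, Tq; meq. Qed.

Lemma sn_qm2 : sn (q - 2) = lambda_q q.
Proof. unfold sn. replace (INR (q-2)) with (INR q - 2).
  2:{ rewrite minus_INR by lia. simpl; ring. }
  replace ((INR q - 2) * th) with (PI - 2 * th) by (rewrite <- qth; ring).
  rewrite sin_PI_x, sin_2a, lam_eq. field. pose proof sth_pos; lra. Qed.

Lemma Tqinv_eq : Tqinv q = scal (-1) (mmul Smat (upow (pred q))).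
Proof. rewrite upow_formula. replace (S (pred q)) with q by lia. rewrite snq.
  assert (E : smin (pred q) = sn (q - 2)).
  { destruct q as [|[|k]]; try lia. simpl. f_equal; lia. }
  rewrite E, snqm1, sn_qm2. unfold Tqinv, Smat, scal; meq. Qed.

Inductive Pw : M2 -> Prop :=
| Pw_I : Pw Id2
| Pw_S : Pw Smat
| Pw_SU : forall a P, (1 <= a <= pred q)%nat -> Pw P -> Pw (mmul Smat (mmul (upow a) P)).

Definition NF (M : M2) : Prop :=
  exists e a P, (e = 1 \/ e = -1) /\ (a <= pred q)%nat /\ Pw P /\ M = scal e (mmul (upow a) P).

Lemma NF_Id : NF Id2.
Proof. exists 1, 0%nat, Id2; repeat split; auto; try lia. constructor. unfold upow; simpl. meq. Qed.

Lemma NF_neg M : NF M -> NF (scal (-1) M).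
Proof. intros (e & a & P & He & Ha & HP & ->). exists (-e), a, P; repeat split; auto.
  destruct He; subst; [right|left]; ring. apply M2_ext; simpl; ring. Qed.

Lemma scal_mmul e A B : mmul A (scal e B) = scal e (mmul A B).
Proof. destruct A, B; meq. Qed.

Lemma NF_U M : NF M -> NF (mmul Umat M).
Proof.
  intros (e & a & P & He & Ha & HP & ->). rewrite scal_mmul, mmul_assoc.
  change (mmul Umat (upow a)) with (upow (S a)).
  destruct (Nat.eq_dec a (pred q)) as [E|E].
  - replace (S a) with q by lia. rewrite upow_q.
    exists (-e), 0%nat, P; repeat split; auto; try lia.
    destruct He; subst; [right|left]; ring. unfold upow; simpl. destruct P; meq.
  - exists e, (S a), P; repeat split; auto; try lia.
Qed.

Lemma NF_S M : NF M -> NF (mmul Smat M).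
Proof.
  intros (e & a & P & He & Ha & HP & ->). rewrite scal_mmul.
  destruct a as [|a].
  - change (upow 0) with Id2. rewrite mmul_Id_l. inversion HP; subst.
    + exists e, 0%nat, Smat; repeat split; auto; try lia. constructor. unfold upow; simpl; meq.
    + exists (-e), 0%nat, Id2; repeat split; auto; try lia.
      destruct He; subst; [right|left]; ring. constructor. unfold upow, Smat; simpl; meq.
    + exists (-e), a, P0; repeat split; auto; try lia.
      destruct He; subst; [right|left]; ring.
      rewrite !mmul_assoc. replace (mmul Smat Smat) with (scal (-1) Id2) by (unfold Smat; meq).
      destruct (upow a), P0; meq.
  - exists e, 0%nat, (mmul Smat (mmul (upow (S a)) P)); repeat split; auto; try lia.
    constructor; auto. lia. unfold upow at 1; simpl. rewrite mmul_Id_l; reflexivity.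
Qed.

Lemma NF_upow k M : NF M -> NF (mmul (upow k) M).
Proof. induction k; intro H. unfold upow; simpl; rewrite mmul_Id_l; auto.
  change (upow (S k)) with (mmul Umat (upow k)). rewrite <- mmul_assoc. apply NF_U; auto. Qed.

Lemma Gq_NF M : in_Gq q M -> NF M.
Proof.
  induction 1.
  - apply NF_Id.
  - apply NF_S; auto.
  - replace (mmul Sinv M) with (scal (-1) (mmul Smat M)) by (unfold Sinv, Smat; destruct M; meq).
    apply NF_neg, NF_S; auto.
  - rewrite <- Umat_Sinv, <- mmul_assoc. apply NF_U.
    replace (mmul Sinv M) with (scal (-1) (mmul Smat M)) by (unfold Sinv, Smat; destruct M; meq).
    apply NF_neg, NF_S; auto.
  - rewrite Tqinv_eq. replace (mmul (scal (-1) (mmul Smat (upow (pred q)))) M)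
      with (scal (-1) (mmul Smat (mmul (upow (pred q)) M))) by (destruct (upow (pred q)), M; meq).
    apply NF_neg, NF_S, NF_upow; auto.
Qed.

Lemma Pw_col P : Pw P -> exists s X Y, (s = 1 \/ s = -1) /\ Z0 X /\ Z0 Y /\
   m11 P = s * X /\ m21 P = - s * Y.
Proof.
  induction 1.
  - exists 1, 1, 0; repeat split; auto; unfold Z0; try lra; simpl; ring.
  - exists (-1), 0, 1; repeat split; auto; unfold Z0; try lra; simpl; ring.
  - destruct IHPw as (s & X & Y & Hs & HX & HY & E1 & E2).
    exists (-s), (sn a * X + sn (pred a) * Y), (sn (S a) * X + sn a * Y).
    assert (Z0 (sn a)) by (apply sn_Z0; lia).
    assert (Z0 (sn (pred a))) by (apply sn_Z0; lia).
    assert (Z0 (sn (S a))) by (apply sn_Z0; lia).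
    repeat split.
    + destruct Hs; subst; [right|left]; ring.
    + apply Z0_add; apply Z0_mul; auto.
    + apply Z0_add; apply Z0_mul; auto.
    + rewrite upow_formula; simpl. rewrite E1, E2. destruct a; [lia|]. simpl. ring.
    + rewrite upow_formula; simpl. rewrite E1, E2. destruct a; [lia|]. simpl. ring.
Qed.

Lemma K_lemma M : in_Gq q M -> m21 M = 0 \/ 1 <= Rabs (m21 M).
Proof.
  intro H. destruct (Gq_NF M H) as (e & a & P & He & Ha & HP & ->).
  destruct (Pw_col P HP) as (s & X & Y & Hs & HX & HY & E1 & E2).
  assert (Hv : exists Z, Z0 Z /\ (m21 (scal e (mmul (upow a) P)) = Z \/ m21 (scal e (mmul (upow a) P)) = - Z)).
  { rewrite upow_formula. simpl. rewrite E1, E2. destruct a as [|a].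
    - exists Y; split; auto. simpl. rewrite sn0.
      destruct He, Hs; subst; [right|left|left|right]; ring.
    - exists (sn (S a) * X + sn a * Y). split.
      + apply Z0_add; apply Z0_mul; auto; apply sn_Z0; lia.
      + simpl. destruct He, Hs; subst; [left|right|right|left]; ring. }
  destruct Hv as (Z & [HZ|HZ] & [E|E]); rewrite E; try (left; rewrite HZ; ring);
   right; try rewrite Rabs_Ropp; rewrite Rabs_right; lra.
Qed.

End Hecke.

Lemma lat_refl q B : lat_eq q B B. Proof. intro v; tauto. Qed.
Lemma lat_sym q B C : lat_eq q B C -> lat_eq q C B. Proof. intros H v; specialize (H v); tauto. Qed.
Lemma lat_trans q B C D : lat_eq q B C -> lat_eq q C D -> lat_eq q B D.
Proof. intros H1 H2 v; specialize (H1 v); specialize (H2 v); tauto. Qed.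

Lemma InLat_mul q C B v : InLat q (mmul C B) v <-> exists w, InLat q B w /\ v = mapply C w.
Proof.
  split.
  - intros (w & Hw & ->). exists (mapply B w); split. exists w; split; auto. apply mapply_mmul.
  - intros (w & (w0 & Hw0 & ->) & ->). exists w0; split; auto. rewrite mapply_mmul; auto.
Qed.

Lemma lat_eq_mul q C B B' : lat_eq q B B' -> lat_eq q (mmul C B) (mmul C B').
Proof. intros H v. rewrite !InLat_mul. split; intros (w & Hw & ->); exists w; split; auto; apply H; auto. Qed.

Lemma Lam_Gq q N w : in_Gq q N -> Lambda_q q w -> Lambda_q q (mapply N w).
Proof. intros HN (M & HM & ->). exists (mmul N M); split. apply Gq_mul; auto. rewrite mapply_mmul; auto. Qed.

Lemma lat_eq_Gq q B N : in_Gq q N -> lat_eq q B (mmul B N).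
Proof.
  intros HN v; split.
  - intros (w & Hw & ->). exists (mapply (minv N) w); split.
    apply Lam_Gq; auto. apply Gq_inv; auto.
    rewrite mapply_mmul, <- (mapply_mmul N), minv_r by (apply (Gq_det q); auto).
    destruct w; unfold mapply; simpl; f_equal; ring.
  - intros (w & Hw & ->). exists (mapply N w); split. apply Lam_Gq; auto. apply mapply_mmul.
Qed.

Lemma Lam_10 q : Lambda_q q (1, 0). Proof. exists Id2; split. constructor. unfold mapply; simpl; f_equal; ring. Qed.
Lemma Lam_01 q : Lambda_q q (0, 1).
Proof. exists Smat; split. apply Gq_one; tauto. unfold mapply; simpl; f_equal; ring. Qed.

Lemma horiz q p c : (3 <= q)%nat -> InLat q (gmat p) (c, 0) -> 0 < fst p -> 0 < c -> fst p = c.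
Proof.
  intros Hq (w & (N & HN & ->) & E) Ha Hc. destruct p as [a b]; simpl in *.
  unfold mapply in E; simpl in E. injection E; intros E2 E1.
  assert (H21 : m21 N = 0).
  { apply (Rmult_eq_reg_l (/ a)). rewrite Rmult_0_r. rewrite E2. ring.
    apply Rinv_neq_0_compat; lra. }
  rewrite H21 in E1.
  assert (H11 : m11 N = c / a) by (rewrite E1; field; lra).
  pose proof (Gq_det q N HN) as Hd. unfold det in Hd. rewrite H21 in Hd.
  pose proof (K_lemma q Hq (mmul N Smat) (Gq_mul q N Smat HN (Gq_one q Smat ltac:(tauto)))) as K2.
  simpl in K2.
  assert (c / a > 0) by (apply Rdiv_lt_0_compat; lra).
  replace (m21 N * 0 + m22 N * 1) with (m22 N) in K2 by ring.
  pose proof (K_lemma q Hq (mmul Smat N) (Gq_S q N HN)) as K1. simpl in K1.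
  replace (1 * m11 N + 0 * m21 N) with (m11 N) in K1 by ring. rewrite H11 in K1.
  rewrite Rabs_right in K1 by lra.
  assert (m22 N = a / c) by (rewrite H11 in Hd; field_simplify in Hd; [|lra];
     apply (Rmult_eq_reg_l (c / a)); [|apply Rgt_not_eq; auto]; field_simplify; try lra; rewrite <- Hd at 1; field; lra).
  rewrite H0 in K2. assert (a / c > 0) by (apply Rdiv_lt_0_compat; lra).
  rewrite Rabs_right in K2 by lra.
  destruct K1 as [K1|K1]; [lra|]. destruct K2 as [K2|K2]; [lra|].
  assert (c / a * a = c) by (field; lra). assert (a / c * c = a) by (field; lra).
  nra.
Qed.

Lemma lam_pos q : (3 <= q)%nat -> 0 < lambda_q q.
Proof. intro Hq. rewrite lam_eq. pose proof (th_pos q Hq); pose proof (th_le q Hq).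
  pose proof PI_RGT_0. assert (0 < cos (th q)) by (apply cos_gt_0; lra). lra. Qed.

Lemma uniq q p p' : (3 <= q)%nat -> FareyT q p -> FareyT q p' -> lat_eq q (gmat p) (gmat p') -> p = p'.
Proof.
  intros Hq Hp Hp' HL. destruct p as [a b], p' as [a' b']. unfold FareyT in *; simpl in *.
  assert (Ea : a = a').
  { apply (horiz q (a, b) a' Hq); simpl; try lra. apply HL.
    exists (1,0); split. apply Lam_10. unfold mapply; simpl; f_equal; ring. }
  subst a'.
  assert (HI : InLat q (gmat (a, b)) (b', / a)).
  { apply HL. exists (0,1); split. apply Lam_01. unfold mapply; simpl; f_equal; ring. }
  destruct HI as (w & (N & HN & ->) & E). unfold mapply in E; simpl in E. injection E; intros E2 E1.
  assert (H21 : m21 N = 1).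
  { replace (0 * (m11 N * 1 + m12 N * 0) + / a * (m21 N * 1 + m22 N * 0)) with (/ a * m21 N) in E2 by ring.
    apply (Rmult_eq_reg_l (/ a)). rewrite Rmult_1_r; auto. apply Rinv_neq_0_compat; lra. }
  rewrite H21 in E1.
  set (t := m11 N). assert (Ht : b' - b = a * t) by (unfold t; lra).
  pose proof (lam_lt2 q Hq). pose proof (lam_pos q Hq).
  assert (Hlt : - lambda_q q < t < lambda_q q).
  { split; apply (Rmult_lt_reg_l a); lra. }
  pose proof (K_lemma q Hq _ (Gq_Sinv q N HN)) as K0.
  pose proof (K_lemma q Hq _ (Gq_Sinv q _ (Gq_Tinv q N HN))) as K1.
  pose proof (K_lemma q Hq _ (Gq_Sinv q _ (Gq_T q N HN))) as K2.
  simpl in K0, K1, K2. rewrite H21 in K1, K2. fold t in K0, K1, K2. unfold Tqinv, Tq in K1, K2; simpl in K1, K2.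
  assert (Ht0 : t = 0).
  { revert K0 K1 K2. unfold Rabs; repeat destruct Rcase_abs; intros; lra. }
  f_equal. rewrite Ht0 in Ht. lra.
Qed.

Lemma Tpow_nat q n : in_Gq q (mkM2 1 (INR n * lambda_q q) 0 1) /\ in_Gq q (mkM2 1 (- (INR n * lambda_q q)) 0 1).
Proof.
  induction n as [|n [IH1 IH2]].
  - simpl. replace (mkM2 1 (0 * lambda_q q) 0 1) with Id2 by meq.
    replace (mkM2 1 (- (0 * lambda_q q)) 0 1) with Id2 by meq. split; constructor.
  - split.
    + replace (mkM2 1 (INR (S n) * lambda_q q) 0 1) with (mmul (Tq q) (mkM2 1 (INR n * lambda_q q) 0 1))
        by (unfold Tq; rewrite S_INR; meq). now constructor.
    + replace (mkM2 1 (- (INR (S n) * lambda_q q)) 0 1) with (mmul (Tqinv q) (mkM2 1 (- (INR n * lambda_q q)) 0 1))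
        by (unfold Tqinv; rewrite S_INR; meq). now constructor.
Qed.

Lemma Tpow_Z q k : in_Gq q (mkM2 1 (IZR k * lambda_q q) 0 1).
Proof.
  destruct k as [|p|p].
  - replace (mkM2 1 (IZR 0 * lambda_q q) 0 1) with Id2 by meq. constructor.
  - replace (IZR (Z.pos p)) with (INR (Pos.to_nat p)) by (rewrite INR_IZR_INZ, positive_nat_Z; auto). apply Tpow_nat.
  - replace (IZR (Z.neg p)) with (- INR (Pos.to_nat p)).
    + replace (- INR (Pos.to_nat p) * lambda_q q) with (- (INR (Pos.to_nat p) * lambda_q q)) by ring.
      apply Tpow_nat.
    + rewrite INR_IZR_INZ, positive_nat_Z, IZR_NEG. reflexivity.
Qed.

Lemma exist_rep q B c : (3 <= q)%nat -> SL2 B -> InLat q B (c, 0) -> 0 < c <= 1 ->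
  exists p, FareyT q p /\ fst p = c /\ lat_eq q B (gmat p).
Proof.
  intros Hq HB (w & (N & HN & ->) & E) Hc.
  rewrite <- mapply_mmul in E. remember (mmul B N) as G eqn:HGd.
  assert (HG : det G = 1) by (rewrite HGd, det_mmul, (Gq_det q N HN); unfold SL2 in HB; rewrite HB; ring).
  unfold mapply in E; simpl in E. injection E; intros E2 E1.
  replace (m11 G * 1 + m12 G * 0) with (m11 G) in E1 by ring.
  replace (m21 G * 1 + m22 G * 0) with (m21 G) in E2 by ring.
  unfold det in HG. rewrite <- E1, <- E2 in HG.
  assert (Hg : G = gmat (c, m12 G)).
  { unfold gmat; simpl. apply M2_ext; simpl; auto.
    apply (Rmult_eq_reg_l c); [|lra]. replace (c * m22 G) with (c * m22 G - m12 G * 0) by ring.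
    rewrite HG. field. lra. }
  pose proof (lam_pos q Hq) as Hl.
  set (y := (1 - m12 G) / (c * lambda_q q)).
  set (k := (up y - 1)%Z).
  destruct (archimed y) as [A1 A2].
  assert (Hk1 : IZR k <= y) by (unfold k; rewrite minus_IZR; simpl; lra).
  assert (Hk2 : y - 1 < IZR k) by (unfold k; rewrite minus_IZR; simpl; lra).
  assert (IZR k * (c * lambda_q q) <= 1 - m12 G).
  { replace (1 - m12 G) with (y * (c * lambda_q q)) by (unfold y; field; lra).
    apply Rmult_le_compat_r; auto. apply Rlt_le, Rmult_lt_0_compat; lra. }
  assert ((y - 1) * (c * lambda_q q) < IZR k * (c * lambda_q q)).
  { apply Rmult_lt_compat_r; auto. apply Rmult_lt_0_compat; lra. }
  replace ((y - 1) * (c * lambda_q q)) with (1 - m12 G - c * lambda_q q) in H0 by (unfold y; field; lra).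
  exists (c, m12 G + IZR k * c * lambda_q q). refine (conj _ (conj _ _)).
  - unfold FareyT; simpl; lra.
  - reflexivity.
  - apply (lat_trans q B G). rewrite HGd. apply lat_eq_Gq; auto.
    replace (gmat (c, m12 G + IZR k * c * lambda_q q)) with (mmul G (mkM2 1 (IZR k * lambda_q q) 0 1)).
    apply lat_eq_Gq, Tpow_Z.
    rewrite Hg; unfold gmat; simpl; meq. all: try lra.
Qed.

Lemma FTR_char q A tau x v : 0 < tau ->
  InLat q (FTRmat A tau x) v <-> exists w, InLat q A w /\ v = (fst w / tau, tau * (snd w - slope x * fst w)).
Proof.
  intro Ht. unfold FTRmat. rewrite InLat_mul. split.
  - intros (w1 & Hw1 & ->). apply InLat_mul in Hw1. destruct Hw1 as (w & Hw & ->).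
    exists w; split; auto. destruct w; unfold mapply; simpl. f_equal; field; lra.
  - intros (w & Hw & ->). exists (mapply (hmat (slope x)) w). split.
    apply InLat_mul; exists w; auto. destruct w; unfold mapply; simpl. f_equal; field; lra.
Qed.

Lemma FTR_SL2 A tau x : 0 < tau -> SL2 A -> SL2 (FTRmat A tau x).
Proof. intros Ht HA. unfold SL2 in *. unfold FTRmat. rewrite !det_mmul, HA.
  unfold det; simpl. field. lra. Qed.

Lemma FTR_horiz q A tau x : 0 < tau -> InLat q A x -> 0 < fst x ->
  InLat q (FTRmat A tau x) (fst x / tau, 0).
Proof. intros Ht Hx Hp. apply FTR_char; auto. exists x; split; auto. f_equal.
  unfold slope. field. lra. Qed.

Lemma IsRoof_uniq q p r r' : IsRoof q p r -> IsRoof q p r' -> r = r'.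
Proof. intros [(v & Hv & Hs & Hp & <-) H] [(v' & Hv' & Hs' & Hp' & <-) H'].
  apply Rle_antisym; [apply H | apply H']; auto. Qed.

Lemma Roof_eq q p r : IsRoof q p r -> Roof q p = r.
Proof. intro H. unfold Roof. pose proof (epsilon_spec (inhabits 0) (IsRoof q p) (ex_intro _ r H)).
  eapply IsRoof_uniq; eauto. Qed.

Section Main.
Variables (q : nat) (A : M2) (tau : R) (u : nat -> vec).
Hypothesis Hq : (3 <= q)%nat.
Hypothesis HA : SL2 A.
Hypothesis Ht : 0 < tau.
Hypothesis Hu : forall n, InLat q A (u n) /\ Strip tau (u n).
Hypothesis Hs : forall n,
      slope (u n) < slope (u (S n)) /\
      (forall w, InLat q A w -> Strip tau w -> slope (u n) < slope w ->
                 slope (u (S n)) <= slope w).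

Definition L n := FTRmat A tau (u n).



Lemma roof_n n p : lat_eq q (L n) (gmat p) ->
  IsRoof q p (tau ^ 2 * (slope (u (S n)) - slope (u n))).
Proof.
  intro HL. destruct (Hs n) as [Hlt Hmin].
  assert (Hsl : forall w, 0 < fst w -> slope (fst w / tau, tau * (snd w - slope (u n) * fst w)) = tau ^ 2 * (slope w - slope (u n))).
  { intros w Hw. assert (0 < fst (u n)) by (destruct (Hu n) as [_ [? ?]]; lra). unfold slope; simpl. field. repeat split; lra. }
  assert (Hst : forall w, Strip 1 (fst w / tau, tau * (snd w - slope (u n) * fst w)) <-> Strip tau w).
  { intro w. unfold Strip; simpl. split; intros [H1 H2].
    - split. apply (Rmult_lt_reg_r (/ tau)). apply Rinv_0_lt_compat; lra. lra.
      apply (Rmult_le_reg_r (/ tau)). apply Rinv_0_lt_compat; lra. rewrite Rinv_r; lra.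
    - split. apply Rdiv_lt_0_compat; lra. apply (Rmult_le_reg_r tau); auto. field_simplify; lra. }
  split.
  - exists (fst (u (S n)) / tau, tau * (snd (u (S n)) - slope (u n) * fst (u (S n)))).
    destruct (Hu (S n)) as [Hi Hstr]. assert (0 < fst (u (S n))) by (destruct Hstr; lra).
    split; [|split; [|split]].
    + apply HL. apply FTR_char; auto. exists (u (S n)); split; auto.
    + apply Hst; auto.
    + rewrite Hsl; auto. apply Rmult_lt_0_compat. apply pow_lt; lra. lra.
    + rewrite Hsl; auto.
  - intros w' Hw' Hstr Hpos. apply HL in Hw'. apply FTR_char in Hw'; auto.
    destruct Hw' as (w & Hw & ->). apply Hst in Hstr. assert (0 < fst w) by (destruct Hstr; lra).
    rewrite Hsl in *; auto.
    assert (slope (u n) < slope w).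
    { assert (0 < tau ^ 2) by (apply pow_lt; lra).
      destruct (Rlt_le_dec (slope (u n)) (slope w)); auto. nra. }
    assert (slope (u (S n)) <= slope w) by (apply Hmin; auto).
    apply Rmult_le_compat_l. apply pow_le; lra. lra.
Qed.

Lemma L_step n : mmul (hmat (tau ^ 2 * (slope (u (S n)) - slope (u n)))) (L n) = L (S n).
Proof. unfold L, FTRmat, hmat, smat. destruct A; meq. all: lra. Qed.

Lemma L_rep n : exists p, FareyT q p /\ fst p = fst (u n) / tau /\ lat_eq q (L n) (gmat p).
Proof.
  destruct (Hu n) as [Hi [H1 H2]]. apply exist_rep; auto.
  apply FTR_SL2; auto. apply FTR_horiz; auto.
  split. apply Rdiv_lt_0_compat; lra. apply (Rmult_le_reg_r tau); auto. field_simplify; lra.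
Qed.

Lemma BCZ_step n p : FareyT q p -> lat_eq q (L n) (gmat p) ->
  FareyT q (BCZ q p) /\ lat_eq q (L (S n)) (gmat (BCZ q p)).
Proof.
  intros Hp HL. pose proof (Roof_eq q p _ (roof_n n p HL)) as HR.
  destruct (L_rep (S n)) as (p' & Hp' & _ & HL').
  set (P := fun c => FareyT q c /\ lat_eq q (mmul (hmat (Roof q p)) (gmat p)) (gmat c)).
  assert (HP' : P p').
  { split; auto. apply (lat_trans q _ (L (S n))); auto. rewrite <- L_step, HR.
    apply lat_eq_mul, lat_sym; auto. }
  pose proof (epsilon_spec (inhabits p) P (ex_intro _ p' HP')) as [H1 H2].
  unfold BCZ. fold P. split; auto.
  apply (lat_trans q _ (mmul (hmat (Roof q p)) (gmat p))); auto.
  rewrite HR, <- L_step. apply lat_eq_mul; auto.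
Qed.
End Main.

Theorem mainTheorem8 (q : nat) (A : M2) (tau : R) (u : nat -> vec) :
  (3 <= q)%nat ->
  SL2 A ->
  0 < tau ->
  (exists v, InLat q A v /\ Strip tau v) ->
  (forall n, InLat q A (u n) /\ Strip tau (u n)) ->
  (forall n,
      slope (u n) < slope (u (S n)) /\
      (forall w, InLat q A w -> Strip tau w -> slope (u n) < slope w ->
                 slope (u (S n)) <= slope w)) ->
  InLat q (FTRmat A tau (u 0%nat)) (fst (u 0%nat) / tau, 0) /\
  Strip 1 (fst (u 0%nat) / tau, 0) /\
  exists ab : R * R,
    FareyT q ab /\ lat_eq q (FTRmat A tau (u 0%nat)) (gmat ab) /\
    (forall c, FareyT q c -> lat_eq q (FTRmat A tau (u 0%nat)) (gmat c) -> c = ab) /\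
    FTR q A tau (u 0%nat) = ab /\
    (forall n,
        InLat q (FTRmat A tau (u n)) (fst (u n) / tau, 0) /\
        Strip 1 (fst (u n) / tau, 0) /\
        lat_eq q (FTRmat A tau (u n)) (gmat (BCZ_iter q n ab)) /\
        FTR q A tau (u n) = BCZ_iter q n (FTR q A tau (u 0%nat))) /\
    (forall n,
        fst (u n) = tau * fst (BCZ_iter q n ab) /\
        fst (u n) = tau * fst (BCZ_iter q 0 (BCZ_iter q n ab)) /\
        snd (u (S n)) = fst (u (S n)) *
          (snd (u n) / fst (u n) + / (tau ^ 2) * Roof q (BCZ_iter q n ab))).
Proof.
  intros Hq HA Ht _ Hu Hs.
  assert (Hhz : forall n, InLat q (FTRmat A tau (u n)) (fst (u n) / tau, 0)).
  { intro n. apply FTR_horiz; auto. apply Hu. destruct (Hu n) as [_ [? ?]]; lra. }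
  assert (Hst : forall n, Strip 1 (fst (u n) / tau, 0)).
  { intro n. destruct (Hu n) as [_ [H1 H2]]. unfold Strip; simpl.
    split. apply Rdiv_lt_0_compat; lra. apply (Rmult_le_reg_r tau); auto. field_simplify; lra. }
  destruct (L_rep q A tau u Hq HA Ht Hu 0) as (ab & Hab & _ & HL0).
  assert (HP : forall n, FareyT q (BCZ_iter q n ab) /\ lat_eq q (L A tau u n) (gmat (BCZ_iter q n ab))).
  { induction n as [|n [IH1 IH2]]. simpl; auto.
    exact (BCZ_step q A tau u Hq HA Ht Hu Hs n _ IH1 IH2). }
  assert (HF : forall n, FTR q A tau (u n) = BCZ_iter q n ab).
  { intro n. destruct (HP n) as [H1 H2].
    set (P := fun c => FareyT q c /\ lat_eq q (FTRmat A tau (u n)) (gmat c)).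
    pose proof (epsilon_spec (inhabits (0,0)) P (ex_intro _ _ (conj H1 H2))) as [E1 E2].
    unfold FTR. fold P. apply (uniq q); auto. apply (lat_trans q _ (FTRmat A tau (u n))); auto.
    apply lat_sym; auto. }
  assert (Hfst : forall n, fst (u n) = tau * fst (BCZ_iter q n ab)).
  { intro n. destruct (HP n) as [H1 H2].
    rewrite (horiz q (BCZ_iter q n ab) (fst (u n) / tau) Hq).
    field; lra. apply H2, Hhz. destruct H1; lra. destruct (Hu n) as [_ [? ?]]. apply Rdiv_lt_0_compat; lra. }
  split; [apply Hhz|]. split; [apply Hst|].
  exists ab. split; auto. split; auto. split.
  { intros c Hc HLc. apply (uniq q); auto. apply (lat_trans q _ (FTRmat A tau (u 0%nat))); auto. apply lat_sym; auto. }
  split. apply (HF 0%nat).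
  split.
  - intro n. split; auto. split; auto. split. apply (HP n). rewrite HF, (HF 0%nat). reflexivity.
  - intro n. split; auto. split; auto.
    destruct (HP n) as [H1 H2].
    rewrite (Roof_eq q _ _ (roof_n q A tau u Ht Hu Hs n _ H2)).
    assert (0 < fst (u n)) by (destruct (Hu n) as [_ [? ?]]; lra).
    assert (0 < fst (u (S n))) by (destruct (Hu (S n)) as [_ [? ?]]; lra).
    unfold slope. field. repeat split; lra.
Qed.
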